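(* Let $T$ be a measure-preserving map on the probability space $(X,\mathcal{A},\mu)$, $(A_l)$ a sequence of asymptotically rare events, $(\nu_l)$ a sequence in $\mathfrak{P}$, and $\tau_l:X\to\mathbb{N}_0$, $l\ge1$, measurable functions. a) $(\tau_l)$ is an admissible delay sequence for the variables $R_l:=\mu(A_l)\Phi_{A_l}:X\to[0,\infty]^{\mathbb{N}_0}$ and the measures $\nu_l$ provided that $\mu(A_l)\tau_l\to0$ in $\nu_l$-probability and $\nu_l(\tau_l<\varphi_{A_l})\to1$ as $l\to\infty$. b) The condition $\nu_l(\tau_l<\varphi_{A_l})\to1$ alone suffices for $(\tau_l)$ to be an admissible delay sequence for the variables $R_l:=\mu(A_l)\Phi_{A_l}\circ T_{A_l}:X\to[0,\infty]^{\mathbb{N}}$ and the $\nu_l$.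
   Context: For $A$ with $\mu(A)>0$: $\varphi_A(x):=\inf\{n\ge1:T^nx\in A\}$, $T_Ax:=T^{\varphi_A(x)}x$, $\Phi_A:=(\varphi_A,\varphi_A\circ T_A,\ldots)$; $[0,\infty]$ metrized by $|e^{-s}-e^{-t}|$, sequence spaces with the product metric $\sum_j2^{-(j+1)}d(s^{(j)},t^{(j)})$. Asymptotically rare: $0<\mu(A_l)\to0$. $\mathfrak{P}$: probabilities $\nu\ll\mu$. $T^\tau x:=T^{\tau(x)}x$. For Borel maps $R_l$ into a compact metric space $\mathfrak{E}$ and probabilities $\nu_l$, $(\tau_l)$ is an admissible delay sequence for $(R_l)$ and $(\nu_l)$ if $D_{\mathfrak{E}}(\nu_l\circ R_l^{-1},\nu_l\circ(R_l\circ T^{\tau_l})^{-1})\to0$, where $D_{\mathfrak{E}}(Q,Q')=\sum_{j\ge1}2^{-(j+1)}|\int\chi_j\,dQ-\int\chi_j\,dQ'|$ for a fixed sequence of Lipschitz $\chi_j$, $|\chi_j|\le1$, obtained by normalizing a dense sequence in $\mathcal{C}(\mathfrak{E})$ (a metric for weak convergence). *)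

(* Defs.v *)
From HB Require Import structures.
From mathcomp Require Import all_boot all_order all_algebra.
From mathcomp Require Import all_classical all_reals all_analysis.
Set Implicit Arguments. Unset Strict Implicit. Unset Printing Implicit Defensive.
Import Order.TTheory GRing.Theory Num.Theory.
Import numFieldNormedType.Exports.
Local Open Scope classical_set_scope.
Local Open Scope ring_scope.

Section defs.
Context {R : realType} {X : Type}.

Definition measure_preserving {d} {X' : measurableType d}
  (mu : set X' -> \bar R) (T : X' -> X') :=
  measurable_fun setT T /\
  forall B, measurable B -> mu (T @^-1` B) = mu B.

Definition asymptotically_rare {d} {X' : measurableType d}
  (mu : set X' -> \bar R) (A : nat -> set X') :=
  (forall l, measurable (A l)) /\ (forall l, (0 < mu (A l))%E) /\
  (mu \o A @ \oo --> 0%E).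

Definition phi (T : X -> X) (A : set X) (x : X) : \bar R :=
  ereal_inf [set (n%:R)%:E | n in [set n : nat | (0 < n)%N /\ A (iter n T x)]].

(* the (nat-valued) hitting time; convention 0 when A is never hit *)
Definition hit_time (T : X -> X) (A : set X) (x : X) : nat :=
  xget 0%N [set n : nat | [/\ (0 < n)%N, A (iter n T x) &
     forall m, (0 < m)%N -> A (iter m T x) -> (n <= m)%N]].

(* induced map T_A x = T^{phi_A x} x  (= x if phi_A x = oo) *)
Definition TA (T : X -> X) (A : set X) (x : X) : X := iter (hit_time T A x) T x.

Definition Phi (T : X -> X) (A : set X) (x : X) : nat -> \bar R :=
  fun k => phi T A (iter k (TA T A) x).

Definition Tdelay (T : X -> X) (tau : X -> nat) (x : X) : X := iter (tau x) T x.

End defs.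

(* The compact metric space E = [0,oo]^N_0 with the metric
   d(s,t) = sum_j 2^{-(j+1)} |e^{-s_j} - e^{-t_j}|. *)
Section Espace.
Context {R : realType}.

Definition expm (x : \bar R) : R :=
  match x with EFin r => expR (- r) | +oo%E => 0 | -oo%E => 0 end.

Definition Eset : set (nat -> \bar R) := [set s | forall j, (0 <= s j)%E].

Definition dE (s t : nat -> \bar R) : R :=
  limn (series (fun j => (2 ^- j.+1) * `|expm (s j) - expm (t j)|)).

Definition E_lipschitz (f : (nat -> \bar R) -> R) :=
  exists L : R, forall s t, Eset s -> Eset t -> `|f s - f t| <= L * dE s t.

Definition E_continuous (f : (nat -> \bar R) -> R) :=
  forall s, Eset s -> forall eps : R, 0 < eps -> exists2 delta : R, 0 < delta &
    forall t, Eset t -> dE s t < delta -> `|f s - f t| < eps.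

(* chi is a sequence of Lipschitz functions bounded by 1 obtained by
   normalizing a dense sequence of C(E): every continuous f on E is a uniform
   limit of rescalings c * chi_j. *)
Definition admissible_chi (chi : nat -> (nat -> \bar R) -> R) :=
  (forall j, E_lipschitz (chi j)) /\
  (forall j s, Eset s -> `|chi j s| <= 1) /\
  (forall f, E_continuous f -> forall eps : R, 0 < eps ->
     exists j c, forall s, Eset s -> `|f s - c * chi j s| < eps).

(* D_E(nu o R^-1, nu o R'^-1), with int chi dQ for the image measure Q
   written as int chi o R dnu *)
Definition D_E {d} {X : measurableType d} (chi : nat -> (nat -> \bar R) -> R)
  (nu : set X -> \bar R) (R1 R2 : X -> nat -> \bar R) : \bar R :=
  (\sum_(j <oo) ((2 ^- j.+2 : R)%:E *
     `| \int[nu]_x (chi j (R1 x))%:E - \int[nu]_x (chi j (R2 x))%:E |))%E.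

Definition admissible_delay {d} {X : measurableType d}
  (chi : nat -> (nat -> \bar R) -> R) (T : X -> X)
  (Rl : nat -> X -> nat -> \bar R) (nu : nat -> set X -> \bar R)
  (tau : nat -> X -> nat) :=
  (fun l => D_E chi (nu l) (Rl l) (Rl l \o Tdelay T (tau l))) @ \oo --> 0%E.

End Espace.

(* Main.v *)
Require Import Defs.
From HB Require Import structures.
From mathcomp Require Import all_boot all_order all_algebra.
From mathcomp Require Import all_classical all_reals all_analysis.
From mathcomp Require Import lra.
Import Order.TTheory GRing.Theory Num.Theory.
Import numFieldNormedType.Exports.
Local Open Scope classical_set_scope.
Local Open Scope ring_scope.

Module Helpers.
Set Implicit Arguments. Unset Strict Implicit.


Section comb.
Context {R : realType} {X : Type} (T : X -> X) (A : set X).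

Definition hits x := exists n, (0 < n)%N /\ A (iter n T x).
Definition Pmin x := [set n : nat | [/\ (0 < n)%N, A (iter n T x) &
     forall m, (0 < m)%N -> A (iter m T x) -> (n <= m)%N]].

Lemma ht_spec x : hits x -> Pmin x (hit_time T A x).
Proof.
move=> [n [n0 An]]; apply: xgetPex.
pose P := fun n => `[< (0 < n)%N /\ A (iter n T x) >].
have exP : exists n, P n by exists n; apply/asboolP.
case: (ex_minnP exP) => m /asboolP [m0 Am] minm.
exists m; split => // k k0 Ak; apply: minm; exact/asboolP.
Qed.

Lemma ht_none x : ~ hits x -> hit_time T A x = 0%N.
Proof.
move=> nh; apply: xgetPN => n [n0 An _]; apply: nh; by exists n.
Qed.

Lemma phi_hit x : hits x -> phi (R:=R) T A x = ((hit_time T A x)%:R)%:E.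
Proof.
move=> h; have [h0 hA hmin] := ht_spec h.
apply/eqP; rewrite eq_le; apply/andP; split.
  apply: ereal_inf_lbound; exists (hit_time T A x) => //.
apply: le_ereal_inf_tmp => _ [n [n0 An] <-].
by rewrite lee_fin ler_nat; apply: hmin.
Qed.

Lemma phi_none x : ~ hits x -> phi (R:=R) T A x = +oo%E.
Proof.
move=> nh; unfold phi; rewrite -(@ereal_inf0 R); congr ereal_inf.
by apply/seteqP; split => // y [n [n0 An] _]; apply: nh; exists n.
Qed.

Lemma phi_ge0 x : (0 <= phi (R:=R) T A x)%E.
Proof.
have [h|nh] := pselect (hits x); first by rewrite phi_hit.
by rewrite phi_none.
Qed.

Definition good (t : nat) x := forall n, (0 < n)%N -> (n <= t)%N -> ~ A (iter n T x).

Lemma good_phi t x : good t x <-> ((t%:R : R)%:E < phi (R:=R) T A x)%E.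
Proof.
have [h|nh] := pselect (hits x).
  have [h0 hA hmin] := ht_spec h.
  rewrite phi_hit // lte_fin ltr_nat; split.
    move=> g; rewrite ltnNge; apply/negP => le; exact: (g _ h0 le).
  by move=> lt n n0 nt An; have := hmin n n0 An; rewrite leqNgt (leq_ltn_trans nt lt).
rewrite phi_none // ltry; split => // _ n n0 _ An; apply: nh; by exists n.
Qed.

Lemma hits_shift t x : good t x -> hits (iter t T x) <-> hits x.
Proof.
move=> g; split.
  move=> [n [n0 An]]; exists (n + t)%N; split; first by rewrite addn_gt0 n0.
  by rewrite iterD.
move=> [n [n0 An]]; have tn : (t < n)%N by rewrite ltnNge; apply/negP => le; exact: (g _ n0 le).
exists (n - t)%N; split; first by rewrite subn_gt0.
by rewrite -iterD subnK // ltnW.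
Qed.

Lemma ht_shift t x : good t x -> hits x ->
  (t < hit_time T A x)%N /\ hit_time T A (iter t T x) = (hit_time T A x - t)%N.
Proof.
move=> g h; have [h0 hA hmin] := ht_spec h.
have th : (t < hit_time T A x)%N by rewrite ltnNge; apply/negP => le; exact: (g _ h0 le).
split => //.
have h' : hits (iter t T x) by apply/(hits_shift g).
have [k0 kA kmin] := ht_spec h'.
rewrite -iterD in kA.
apply/eqP; rewrite eqn_leq; apply/andP; split.
  apply: kmin; first by rewrite subn_gt0.
  by rewrite -iterD subnK // ltnW.
rewrite leq_subLR addnC; apply: hmin => //; by rewrite addn_gt0 k0.
Qed.

Definition TA' := TA T A.

Lemma TA_shift t x : good t x -> hits x -> TA T A (iter t T x) = TA T A x.
Proof.
move=> g h; have [th e] := ht_shift g h.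
by rewrite /TA e -iterD subnK // ltnW.
Qed.

Lemma TA_none x : ~ hits x -> TA T A x = x.
Proof. by move=> nh; rewrite /TA ht_none. Qed.

Lemma iter_TA_none k x : ~ hits x -> iter k (TA T A) x = x.
Proof. by move=> nh; elim: k => //= k ->; rewrite TA_none. Qed.

Lemma Phi_shift_S t x k : good t x ->
  Phi (R:=R) T A (iter t T x) k.+1 = Phi (R:=R) T A x k.+1.
Proof.
move=> g; rewrite /Phi !iterSr.
have [h|nh] := pselect (hits x); first by rewrite TA_shift.
have nh' : ~ hits (iter t T x) by move/(hits_shift g).
rewrite !TA_none // !iter_TA_none // !phi_none //.
Qed.

Lemma Phi_TA_shift t x k : good t x ->
  Phi (R:=R) T A (TA T A (iter t T x)) k = Phi (R:=R) T A (TA T A x) k.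
Proof.
move=> g.
have [h|nh] := pselect (hits x); first by rewrite TA_shift.
have nh' : ~ hits (iter t T x) by move/(hits_shift g).
by rewrite /Phi !TA_none // !iter_TA_none // !phi_none.
Qed.

End comb.


Section kfun.
Context d (X : measurableType d) (R : realType).
Import HBSimple HBNNSimple.
Variables (h : {nnsfun X >-> R}) (G : set X) (mG : measurable G) (c : R).

Let S := G `&` (h @^-1` `[c, +oo[).
Let mS : measurable S.
Proof.
have := @measurable_funP _ _ _ _ setT h measurableT (`[c, +oo[%classic) (measurable_itv _).
by rewrite setTI => mh; apply: measurableI.
Qed.

Let hs : {sfun X >-> R} := h.
Definition kf := ((hs : X -> R) \- (cst_sfun c : X -> R)) \* (@indic_sfun _ _ R _ mS : X -> R).

HB.instance Definition _ := SimpleFun.copy kf (((hs : X -> R) \- (cst_sfun c : X -> R)) \* (@indic_sfun _ _ R _ mS : X -> R)).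

Lemma kf_ge0 : forall x, 0 <= kf x.
Proof.
move=> x; rewrite /kf /= measurable_realfun.mindicE; case: (boolP (x \in S)) => [|_]; last by rewrite mulr0.
rewrite inE => -[_ /=]; rewrite in_itv /= andbT => cx.
by rewrite mulr1 subr_ge0.
Qed.

HB.instance Definition _ := @isNonNegFun.Build X R kf kf_ge0.

Definition knn : {nnsfun X >-> R} := kf.

Lemma knnE x : knn x = if x \in S then h x - c else 0.
Proof.
have -> : knn x = kf x by [].
rewrite /kf /= measurable_realfun.mindicE; case: (boolP (x \in S)); by rewrite ?mulr1 ?mulr0.
Qed.

Lemma knn_S x : (G x /\ c <= h x) -> knn x = h x - c.
Proof. by move=> [Gx cx]; rewrite knnE mem_set //; split => //=; rewrite in_itv /= andbT. Qed.

Lemma knn_nS x : ~ (G x /\ c <= h x) -> knn x = 0.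
Proof.
move=> n; rewrite knnE; case: ifPn => // /set_mem [Gx /=]; rewrite in_itv /= andbT => cx.
by exfalso; apply: n.
Qed.

End kfun.

Section L0.
Context d (X : measurableType d) (R : realType) (P : probability X R).
Import HBSimple HBNNSimple.
Local Open Scope ereal_scope.

Lemma L0 (f g : X -> \bar R) (G : set X) (c : R) :
  measurable G -> (0 <= c)%R -> (forall x, 0 <= f x) -> (forall x, f x <= 1) ->
  (forall x, 0 <= g x) -> (forall x, G x -> f x <= g x + c%:E) ->
  \int[P]_x f x <= \int[P]_x g x + c%:E + P (~` G).
Proof.
move=> mG c0 f0 f1 g0 fg.
rewrite (ge0_integralTE _ f0) (ge0_integralTE _ g0).
apply: ge_ereal_sup => _ [h /= hf <-].
pose k := knn h mG c.
have kg : forall x, (k x)%:E <= g x.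
  move=> x; have [[Gx cx]|n] := pselect (G x /\ (c <= h x)%R).
    rewrite /k knn_S // EFinB leeBlDr //.
    exact: le_trans (hf x) (fg x Gx).
  by rewrite /k knn_nS.
have mGC : measurable (~` G) by exact: measurableC.
pose cc := cst_nnsfun X (NngNum c0).
pose iG := indic_nnsfun R mGC.
have hle : forall x, (h x <= add_nnsfun k (add_nnsfun cc iG) x)%R.
  move=> x /=; rewrite measurable_realfun.mindicE.
  have [Gx|nGx] := pselect (G x).
    have -> : (x \in ~` G) = false by apply/negbTE/negP => /set_mem.
    have [cx|cx] := leP c (h x).
      by rewrite /k knn_S // addr0 subrK.
    rewrite /k knn_nS; last by move=> [_ cx']; move: (lt_le_trans cx cx'); rewrite ltxx.
    by rewrite add0r addr0 ltW.
  rewrite mem_set //=.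
  have := f1 x; have := hf x => /le_trans /[apply]; rewrite lee_fin => h1.
  have := @kf_ge0 _ _ _ h G mG c x; lra.
have := le_sintegral P hle; rewrite !sintegralD.
have -> : sintegral P cc = c%:E.
  have := sintegral_EFin_cst P setT (NngNum c0); rewrite patch_setT /= probability_setT mule1.
  by [].
rewrite sintegral_indic => le1; apply: (le_trans le1).
rewrite addeA leeD2r // leeD2r //.
by apply: ereal_sup_ubound; exists k.
Qed.

End L0.

Section L1.
Context d (X : measurableType d) (R : realType) (P : probability X R).
Local Open Scope ereal_scope.

Lemma maxpos (a b c : R) : (`|a - b| <= c)%R -> (Num.max a 0 <= Num.max b 0 + c)%R.
Proof.
move=> /ler_normlP [h1 h2].
have c0 : (0 <= c)%R by lra.
rewrite /Num.max; case: ltP => ha; case: ltP => hb; lra.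
Qed.

Lemma int01 (f : X -> \bar R) : (forall x, 0 <= f x) -> (forall x, f x <= 1) ->
  exists a : R, \int[P]_x f x = a%:E /\ (0 <= a <= 1)%R.
Proof.
move=> f0 f1.
have i0 : 0 <= \int[P]_x f x by apply: integral_ge0 => x _.
have i1 : \int[P]_x f x <= 1.
  have fg : forall x, setT x -> f x <= cst 0%R x + (1%R)%:E by move=> x _ /=; rewrite add0r.
  have := L0 P measurableT ler01 f0 f1 (fun _ => lexx 0) fg.
  by rewrite integral0 setCT measure0 adde0 add0r.
have fin : \int[P]_x f x \is a fin_num.
  by rewrite ge0_fin_numE // (le_lt_trans i1) // ltry.
exists (fine (\int[P]_x f x)); rewrite fineK //; split => //.
by rewrite -lee_fin -[X in _ && X]lee_fin fineK // i0 i1.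
Qed.

Lemma L1 (u v : X -> R) (G : set X) (c : R) :
  measurable G -> (0 <= c)%R -> (forall x, `|u x| <= 1)%R -> (forall x, `|v x| <= 1)%R ->
  (forall x, G x -> `|u x - v x| <= c)%R ->
  `| \int[P]_x (u x)%:E - \int[P]_x (v x)%:E | <= (2 * (c + fine (P (~` G))))%:E.
Proof.
move=> mG c0 u1 v1 uv.
have mGC : measurable (~` G) by exact: measurableC.
have p0 : 0 <= P (~` G) by [].
have p1 : P (~` G) <= 1 by apply: probability_le1.
have pfin : P (~` G) \is a fin_num by rewrite ge0_fin_numE // (le_lt_trans p1) // ltry.
have [p [ep p01]] : exists p : R, P (~` G) = p%:E /\ (0 <= p <= 1)%R.
  exists (fine (P (~` G))); rewrite fineK //; split => //.
  by rewrite -lee_fin -[X in _ && X]lee_fin fineK // p0 p1.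
rewrite ep /=.
have pos1 (w : X -> R) : (forall x, `|w x| <= 1)%R -> forall x, (fun x => (w x)%:E)^\+ x <= 1.
  move=> w1 x; rewrite funeposE -EFin_max lee_fin ge_max ler01 andbT.
  by have := w1 x; rewrite ler_norml => /andP[].
have neg1 (w : X -> R) : (forall x, `|w x| <= 1)%R -> forall x, (fun x => (w x)%:E)^\- x <= 1.
  move=> w1 x; rewrite funenegE -EFin_max lee_fin ge_max ler01 andbT.
  by have := w1 x; rewrite ler_norml => /andP[]; rewrite lerNl.
have [a0 [ea0 a001]] := int01 (funepos_ge0 _) (pos1 _ u1).
have [a1 [ea1 a101]] := int01 (funeneg_ge0 _) (neg1 _ u1).
have [b0 [eb0 b001]] := int01 (funepos_ge0 _) (pos1 _ v1).
have [b1 [eb1 b101]] := int01 (funeneg_ge0 _) (neg1 _ v1).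
have H (w z : X -> R) (s : bool) : (forall x, `|w x| <= 1)%R -> (forall x, G x -> `|w x - z x| <= c)%R ->
   \int[P]_x (if s then (fun x => (w x)%:E)^\+ x else (fun x => (w x)%:E)^\- x) <=
   \int[P]_x (if s then (fun x => (z x)%:E)^\+ x else (fun x => (z x)%:E)^\- x) + c%:E + P (~` G).
  move=> w1 wz; apply: L0 => //.
  - by move=> x; case: s; [exact: funepos_ge0|exact: funeneg_ge0].
  - by move=> x; case: s; [exact: pos1|exact: neg1].
  - by move=> x; case: s; [exact: funepos_ge0|exact: funeneg_ge0].
  - move=> x Gx; case: s; rewrite ?funeposE ?funenegE -!EFin_max -EFinD lee_fin; apply: maxpos.
      exact: wz.
    by rewrite -opprD normrN; exact: wz.
have uv' : forall x, G x -> (`|v x - u x| <= c)%R by move=> x Gx; rewrite distrC; exact: uv.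
have h1 := H u v true u1 uv; have h2 := H v u true v1 uv'.
have h3 := H u v false u1 uv; have h4 := H v u false v1 uv'.
rewrite /= ea0 eb0 ea1 eb1 ep in h1 h2 h3 h4.
rewrite (integralE _ _ (fun x => (u x)%:E)) (integralE _ _ (fun x => (v x)%:E)).
rewrite ea0 ea1 eb0 eb1 -!EFinD !lee_fin in h1 h2 h3 h4 *.
rewrite ?abse_EFin ?lee_fin.
apply/ler_normlP; split; lra.
Qed.

End L1.


Section series.
Context {R : realType}.

Lemma pow2S n : (2 ^- n.+1 : R) = 2 ^- n / 2.
Proof. by rewrite exprSr invfM. Qed.

Lemma pow2_ge0 n : (0 : R) <= 2 ^- n.
Proof. by rewrite invr_ge0 exprn_ge0. Qed.

Lemma geo1 n : \sum_(0 <= j < n) (2 ^- j.+1 : R) = 1 - 2 ^- n.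
Proof.
elim: n => [|n IH]; first by rewrite big_geq // expr0 invr1 subrr.
rewrite big_nat_recr //= IH !pow2S; lra.
Qed.

Lemma geotail (J n : nat) : \sum_(0 <= j < n) (if (J <= j)%N then 2 ^- j else 0 : R)
   = if (J <= n)%N then 2 * 2 ^- J - 2 * 2 ^- n else 0.
Proof.
elim: n => [|n IH].
  rewrite big_geq //; case: ifP => //; rewrite leqn0 => /eqP ->; lra.
rewrite big_nat_recr //= IH pow2S.
case: (leqP J n) => Jn.
  by rewrite (leq_trans Jn (leqnSn n)); lra.

case: (leqP J n.+1) => J1; last lra.
have eJ : J = n.+1 by apply/eqP; rewrite eqn_leq Jn J1.
rewrite eJ pow2S; lra.
Qed.

Lemma geotail_le (J n : nat) : \sum_(0 <= j < n) (if (J <= j)%N then 2 ^- j else 0 : R) <= 2 * 2 ^- J.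
Proof.
rewrite geotail; case: ifP => _; have := pow2_ge0 n; have := pow2_ge0 J; lra.
Qed.

Lemma sum_cut (f : nat -> R) (J n : nat) : (forall j, 0 <= f j) ->
  \sum_(0 <= j < n) (if (j < J)%N then f j else 0) <= \sum_(0 <= j < J) f j.
Proof.
move=> f0; case: (leqP n J) => nJ.
  have e : \sum_(0 <= j < J) f j = \sum_(0 <= j < n) f j + \sum_(n <= j < J) f j.
    exact: (@big_cat_nat _ _ _ n 0 J _ _ (leq0n n) nJ).
  have e2 : \sum_(0 <= j < n) (if (j < J)%N then f j else 0) = \sum_(0 <= j < n) f j.
    apply: eq_big_nat => j /andP[_ jn]; by rewrite (leq_trans jn nJ).
  rewrite e e2 lerDl; apply: sumr_ge0 => j _; exact: f0.
have e : \sum_(0 <= j < n) (if (j < J)%N then f j else 0) =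
   \sum_(0 <= j < J) (if (j < J)%N then f j else 0) + \sum_(J <= j < n) (if (j < J)%N then f j else 0).
  exact: (@big_cat_nat _ _ _ J 0 n _ _ (leq0n J) (ltnW nJ)).
have e2 : \sum_(J <= j < n) (if (j < J)%N then f j else 0) = 0.
  rewrite big_nat_cond; apply: big1 => j /andP[/andP[Jj _] _]; by rewrite ltnNge Jj.
have e3 : \sum_(0 <= j < J) (if (j < J)%N then f j else 0) = \sum_(0 <= j < J) f j.
  apply: eq_big_nat => j /andP[_ jn]; by rewrite jn.
by rewrite e e2 e3 addr0.
Qed.
Local Open Scope ereal_scope.

Lemma nneseries_bound (u : nat -> \bar R) (b : nat -> R) (B : R) :
  (forall j, 0 <= u j) -> (forall j, u j <= (b j)%:E) ->
  (forall n, (\sum_(0 <= j < n) b j <= B)%R) ->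
  \sum_(j <oo) u j <= B%:E.
Proof.
move=> u0 ub bB.
apply: lime_le; first exact: is_cvg_nneseries.
apply: nearW => n.
apply: le_trans (_ : (\sum_(0 <= j < n) (b j)%:E) <= _).
  by apply: lee_sum => j _.
by rewrite sumEFin lee_fin.
Qed.

End series.



Section meas.
Context d (X : measurableType d) (T : X -> X) (A : set X).
Hypothesis mT : measurable_fun setT T.
Hypothesis mA : measurable A.

Lemma iter_meas n : measurable_fun setT (iter n T).
Proof.
elim: n => [|n IH]; first exact: measurable_id.
have -> : iter n.+1 T = T \o iter n T by apply/funext.
exact: measurableT_comp.
Qed.

Lemma pre_meas (tau : X -> nat) (Q : set nat) : measurable_fun setT tau ->
  measurable [set x | Q (tau x)].
Proof.
move=> mt; have := mt measurableT Q I; by rewrite setTI.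
Qed.

Lemma good_meas (tau : X -> nat) : measurable_fun setT tau ->
  measurable [set x | good T A (tau x) x].
Proof.
move=> mt.
have -> : [set x | good T A (tau x) x] =
  \bigcap_n ~` ([set x | (n < tau x)%N] `&` (iter n.+1 T) @^-1` A).
  apply/seteqP; split => x.
    move=> g n _ [nt An]; exact: (g n.+1 (ltn0Sn n) nt An).
  move=> H [//|n] _ nt An; exact: (H n I (conj nt An)).
apply: bigcapT_measurable => n; apply: measurableC; apply: measurableI.
  exact: (pre_meas (fun m => (n < m)%N)).
have := iter_meas n.+1 measurableT mA; by rewrite setTI.
Qed.

End meas.

Section expm.
Context {R : realType}.

Lemma expR_lip (s t : R) : 0 <= s -> s <= t -> `|expR (- s) - expR (- t)| <= t - s.
Proof.
move=> s0 st.
have e : expR (- t) = expR (- s) * expR (- (t - s)) by rewrite -expRD; congr expR; lra.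
have h1 : expR (- s) <= 1 by rewrite -expR0 ler_expR; lra.
have h2 : 1 - (t - s) <= expR (- (t - s)) by have := expR_ge1Dx (- (t - s)); lra.
have h3 : expR (- (t - s)) <= 1 by rewrite -expR0 ler_expR; lra.
have h4 : 0 < expR (- s) := expR_gt0 _.
rewrite e ger0_norm; last first.
  rewrite subr_ge0 -[X in _ <= X]mulr1 ler_wpM2l //; lra.
rewrite -[X in X - _]mulr1 -mulrBr.
apply: le_trans (_ : 1 * (1 - expR (- (t - s))) <= _); last lra.
apply: ler_wpM2r; lra.
Qed.

Lemma dE_first (s t : nat -> \bar R) : (forall j, (0 < j)%N -> s j = t j) ->
  dE s t = 2 ^- 1 * `|expm (s 0%N) - expm (t 0%N)|.
Proof.
move=> st; rewrite /dE; apply: lim_near_cst => //.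
exists 1%N => // n /= n0.
rewrite /series /=; case: n n0 => // n _.
rewrite big_nat_recl // big_nat_cond big1 ?addr0 //.
move=> j _; by rewrite st // subrr normr0 mulr0.
Qed.

End expm.

Section expm_shift.
Context {R : realType} {X : Type} (T : X -> X) (A : set X).

Lemma expm_shift (a : R) (t : nat) x : 0 < a -> good T A t x ->
  `|expm (a%:E * phi (R:=R) T A x) - expm (a%:E * phi (R:=R) T A (iter t T x))| <= a * t%:R.
Proof.
move=> a0 g.
have [h|nh] := pselect (hits T A x).
  have h' : hits T A (iter t T x) by apply/(hits_shift g).
  have [th e] := ht_shift g h.
  rewrite !phi_hit // e -!EFinM /= distrC.
  have -> : a * t%:R = a * (hit_time T A x)%:R - a * (hit_time T A x - t)%:R.
    by rewrite natrB ?(ltnW th) //; lra.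
  apply: expR_lip.
    by apply: mulr_ge0; [lra|exact: ler0n].
  by apply: ler_wpM2l; [lra|rewrite ler_nat leq_subr].
have nh' : ~ hits T A (iter t T x) by move/(hits_shift g).
rewrite !phi_none // mulry gtr0_sg // mul1e /= subrr normr0.
by apply: mulr_ge0; [lra|exact: ler0n].
Qed.

End expm_shift.


Lemma pow2_le1 {R : realType} j : (2 ^- j : R) <= 1.
Proof. by rewrite invf_le1 ?exprn_gt0 // exprn_ege1 // ler1n. Qed.

Lemma DE_bound d (X : measurableType d) (R : realType) (P : probability X R)
  (chi : nat -> (nat -> \bar R) -> R) (R1 R2 : X -> nat -> \bar R) (G : set X)
  (c : nat -> R) (J : nat) :
  (forall j s, Eset s -> `|chi j s| <= 1) -> (forall x, Eset (R1 x)) -> (forall x, Eset (R2 x)) ->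
  measurable G -> (forall j, 0 <= c j) ->
  (forall j x, G x -> `|chi j (R1 x) - chi j (R2 x)| <= c j) ->
  (D_E chi P R1 R2 <= ((\sum_(0 <= j < J) c j) + fine (P (~` G)) + 2 * 2 ^- J)%:E)%E.
Proof.
move=> chi1 E1 E2 mG c0 cb.
set p := fine (P (~` G)).
have p0 : 0 <= p by apply: fine_ge0.
rewrite /D_E.
apply: (@nneseries_bound _ _ (fun j => (if (j < J)%N then c j else 0) + 2 ^- j.+1 * p +
   (if (J <= j)%N then 2 ^- j else 0))).
- move=> j; apply: mule_ge0; [by rewrite lee_fin pow2_ge0|exact: abse_ge0].
- move=> j.
  have u1 : forall x, `|chi j (R1 x)| <= 1 by move=> x; exact: chi1.
  have v1 : forall x, `|chi j (R2 x)| <= 1 by move=> x; exact: chi1.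
  have q1 := @pow2_le1 R j; have q0 := @pow2_ge0 R j.
  have e2 : (2 ^- j.+2 : R) = 2 ^- j / 4.
    rewrite !pow2S; lra.
  have e1 : (2 ^- j.+1 : R) = 2 ^- j / 2 by rewrite pow2S.
  case: (ltnP j J) => jJ.
    have := L1 P mG (c0 j) u1 v1 (cb j) => h.
    apply: le_trans (lee_wpmul2l _ h) _; first by rewrite lee_fin pow2_ge0.
    rewrite -EFinM lee_fin -/p e2 e1; have := c0 j; nra.
  have b2 : forall x, setT x -> `|chi j (R1 x) - chi j (R2 x)| <= 2%:R.
    move=> x _; apply: le_trans (ler_normB _ _) _; have := u1 x; have := v1 x; lra.
  have h := L1 P measurableT (ler0n _ 2) u1 v1 b2.
  apply: le_trans (lee_wpmul2l _ h) _; first by rewrite lee_fin pow2_ge0.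
  rewrite setCT measure0 /= -EFinM lee_fin e2 e1; nra.
- move=> n; rewrite !big_split /= -mulr_suml geo1.
  have h1 := @sum_cut R c J n c0.
  have h2 := @geotail_le R J n.
  have h3 := pow2_ge0 n (R:=R).
  nra.
Qed.

End Helpers.
Import Helpers.

Section helpers.
Context {R : realType}.

Lemma cvg0_helper (u : nat -> \bar R) : (forall l, (0 <= u l)%E) ->
  (forall d : R, 0 < d -> \forall l \near \oo, (u l <= d%:E)%E) -> u @ \oo --> 0%E.
Proof.
move=> u0 H; apply/fine_cvgP; split.
  have := H 1 ltr01; apply: filterS => l ul.
  by rewrite ge0_fin_numE // (le_lt_trans ul) // ltry.
apply/cvgrPdist_le => e e0; have := H e e0; apply: filterS => l ul.
have fin : u l \is a fin_num by rewrite ge0_fin_numE // (le_lt_trans ul) // ltry.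
rewrite sub0r normrN ger0_norm /=; last exact: fine_ge0.
by rewrite -lee_fin fineK.
Qed.

Lemma cvg_near_le (u : nat -> \bar R) (b : R) : u @ \oo --> b%:E ->
  forall e : R, 0 < e -> \forall l \near \oo, ((b - e)%:E <= u l /\ u l <= (b + e)%:E)%E.
Proof.
move=> /fine_cvgP [fin cv] e e0.
move/cvgrPdist_le : cv => /(_ e e0) H.
apply: filterS2 fin H => l fl /=; rewrite -(fineK fl) !lee_fin => h.
move: h; rewrite ler_distlC => /andP[h1 h2]; split => //.
Qed.

Lemma Jex (e : R) : 0 < e -> exists J : nat, 2 * 2 ^- J <= e.
Proof.
move=> e0; exists (Num.trunc (2 / e)).+1.
set J := (Num.trunc (2 / e)).+1.
have h1 : 2 / e < J%:R by exact: truncnS_gt.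
have h2 : (J%:R : R) <= 2 ^+ J by rewrite -natrX ler_nat ltnW // ltn_expl.
have h3 : 2 < e * J%:R by rewrite mulrC -ltr_pdivrMr.
have p0 : (0 : R) < 2 ^+ J by rewrite exprn_gt0.
rewrite -ler_pdivlMr // invrK.
have := ler_wpM2l (ltW e0) h2; lra.
Qed.

End helpers.

Theorem mainTheorem14 (d : measure_display) (X : measurableType d)
  (R : realType) (mu : probability X R) (T : X -> X)
  (A : nat -> set X) (nu : nat -> probability X R) (tau : nat -> X -> nat)
  (chi : nat -> (nat -> \bar R) -> R) :
  measure_preserving mu T ->
  asymptotically_rare mu A ->
  (forall l, nu l `<< mu) ->
  (forall l, measurable_fun setT (tau l)) ->
  admissible_chi chi ->
  (* a) *)
  ((forall eps : R, 0 < eps ->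
      (fun l => nu l [set x | (eps%:E < mu (A l) * ((tau l x)%:R)%:E)%E])
        @ \oo --> 0%E) ->
   (fun l => nu l [set x | (((tau l x)%:R : R)%:E < phi T (A l) x)%E]) @ \oo --> 1%E ->
   admissible_delay chi T
     (fun l x => fun k => (mu (A l) * Phi T (A l) x k)%E) nu tau)
  /\
  (* b) *)
  ((fun l => nu l [set x | (((tau l x)%:R : R)%:E < phi T (A l) x)%E]) @ \oo --> 1%E ->
   admissible_delay chi T
     (fun l x => fun k => (mu (A l) * Phi T (A l) (TA T (A l) x) k)%E) nu tau).
Proof.
move=> [mT _] [mA [Apos _]] _ mtau [chiL [chi1 _]].
have Afin l : mu (A l) = (fine (mu (A l)))%:E.
  by rewrite fineK // ge0_fin_numE // (le_lt_trans (probability_le1 _ (mA l))) ?ltry.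
pose G l := [set x | good T (A l) (tau l x) x].
have mG l : measurable (G l) := good_meas mT (mA l) (mtau l).
have eG : (fun l => nu l [set x | (((tau l x)%:R : R)%:E < phi T (A l) x)%E]) = (fun l => nu l (G l)).
  apply/funext => l; congr (nu l _); apply/seteqP; split => x /=.
    by move/good_phi.
  by move/(good_phi (R:=R)).
have pG : (fun l => nu l (G l)) @ \oo --> 1%E ->
    forall e : R, 0 < e -> \forall l \near \oo, fine (nu l (~` G l)) <= e.
  move=> hG e e0; have := @cvg_near_le _ _ _ hG e e0; apply: filterS => l [h1 _].
  rewrite probability_setC //.
  have fin : nu l (G l) \is a fin_num.
    by rewrite ge0_fin_numE // (le_lt_trans (probability_le1 _ (mG l))) ?ltry.
  move: h1; rewrite -(fineK fin) -EFinB /= lee_fin; lra.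
have E1 (B : X -> X) l x : Eset (fun k => (mu (A l) * Phi T (A l) (B x) k)%E).
  by move=> k; apply: mule_ge0 => //; exact: phi_ge0.
have DEge0 (R1 R2 : X -> nat -> \bar R) l : (0 <= D_E chi (nu l) R1 R2)%E.
  apply: nneseries_ge0 => j _ _; apply: mule_ge0; [by rewrite lee_fin pow2_ge0|exact: abse_ge0].
split.
- move=> heps; rewrite eG => hG; rewrite /admissible_delay.
  apply: cvg0_helper => [l|e e0]; first exact: DEge0.
  have e40 : 0 < e / 4 by lra.
  have [J hJ] := @Jex R (e/4) e40.
  have [L HL] := choice chiL.
  pose M := \sum_(0 <= j < J) `|L j|.
  have M0 : 0 <= M by apply: sumr_ge0 => j _.
  pose eps := e / 4 / (M + 1).
  have eps0 : 0 < eps by apply: divr_gt0 => //; lra.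
  have epsM : eps * (M + 1) = e / 4 by rewrite /eps divfK //; apply/eqP; lra.
  have hMe : M * eps <= e / 4 by nra.
  have hE := @cvg_near_le _ _ _ (heps eps eps0) (e/4) e40.
  have hp := pG hG _ e40.
  apply: filterS2 hp hE => l hl [_ hl1].
  pose B := [set x | (eps%:E < mu (A l) * ((tau l x)%:R)%:E)%E].
  have mB : measurable B by exact: (pre_meas (fun m : nat => (eps%:E < mu (A l) * (m%:R)%:E)%E) (mtau l)).
  pose G' := G l `&` ~` B.
  have mG' : measurable G' by apply: measurableI => //; exact: measurableC.
  set a := fine (mu (A l)).
  have eA : mu (A l) = a%:E by rewrite /a -Afin.
  have a0 : 0 < a by rewrite -lte_fin -eA.
  have c0 : forall j, 0 <= `|L j| * eps by move=> j; apply: mulr_ge0 => //; exact: ltW.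
  have cb : forall j x, G' x -> `|chi j ((fun x k => (mu (A l) * Phi T (A l) x k)%E) x) -
      chi j (((fun x k => (mu (A l) * Phi T (A l) x k)%E) \o Tdelay T (tau l)) x)| <= `|L j| * eps.
    move=> j x [Gx nBx].
    have := HL j _ _ (E1 id l x) (E1 (Tdelay T (tau l)) l x).
    rewrite dE_first; last by case => // k _; rewrite /= /Tdelay Phi_shift_S.
    rewrite /= /Tdelay /Phi /= eA => hL.
    have hx := @expm_shift R X T (A l) a (tau l x) x a0 Gx.
    have hte : a * (tau l x)%:R <= eps.
      by rewrite leNgt; apply/negP => h; apply: nBx; rewrite /B /= eA -EFinM lte_fin.
    set D := `|expm _ - expm _| in hL hx.
    have D0 : 0 <= D := normr_ge0 _.
    have LL := ler_norm (L j).
    have LL0 := normr_ge0 (L j).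
    have i2 : (2 ^- 1 : R) <= 1 := pow2_le1 1.
    have i3 : (0 : R) <= 2 ^- 1 := pow2_ge0 1.
    have qD1 : 0 <= 2 ^- 1 * D by apply: mulr_ge0.
    have qD2 : 2 ^- 1 * D <= eps.
      apply: le_trans (_ : 1 * D <= _); first by apply: ler_wpM2r.
      rewrite mul1r; exact: le_trans hx hte.
    set D' := 2 ^- 1 * D in hL qD1 qD2.
    apply: le_trans hL _.
    apply: le_trans (_ : `|L j| * D' <= _); first by apply: ler_wpM2r.
    by apply: ler_wpM2l.
  have := @DE_bound _ _ _ (nu l) chi (fun x k => (mu (A l) * Phi T (A l) x k)%E)
     ((fun x k => (mu (A l) * Phi T (A l) x k)%E) \o Tdelay T (tau l)) G'
     (fun j => `|L j| * eps) J chi1 (E1 id l) (E1 (Tdelay T (tau l)) l) mG' c0 cb.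
  move=> h; apply: le_trans h _; rewrite lee_fin -mulr_suml -/M.
  have finP S : measurable S -> nu l S = (fine (nu l S))%:E.
    move=> mS; rewrite fineK // ge0_fin_numE // (le_lt_trans (probability_le1 _ mS)) ?ltry //.
  have hU : fine (nu l (~` G')) <= fine (nu l (~` G l)) + fine (nu l B).
    have : (nu l (~` G') <= nu l (~` G l) + nu l B)%E.
      rewrite /G' setCI setCK; apply: measureU2 => //; exact: measurableC.
    have mC1 : measurable (~` G') by exact: measurableC.
    have mC2 : measurable (~` G l) by exact: measurableC.
    by rewrite (finP _ mC1) (finP _ mC2) (finP _ mB) -EFinD lee_fin.
  move: hl1; rewrite (finP _ mB) lee_fin add0r => hl1.
  move: hU hl hl1 hMe hJ.
  set p1 := fine (nu l (~` G')); set p2 := fine (nu l (~` G l)); set p3 := fine (nu l B).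
  set q := 2 ^- J; set me := M * eps.
  move=> *; lra.
- rewrite eG => hG; rewrite /admissible_delay.
  apply: cvg0_helper => [l|e e0]; first exact: DEge0.
  have e20 : 0 < e / 2 by lra.
  have [J hJ] := @Jex R (e/2) e20.
  have := pG hG _ e20; apply: filterS => l hl.
  have := @DE_bound _ _ _ (nu l) chi (fun x k => (mu (A l) * Phi T (A l) (TA T (A l) x) k)%E)
     ((fun x k => (mu (A l) * Phi T (A l) (TA T (A l) x) k)%E) \o Tdelay T (tau l)) (G l)
     (fun _ => 0) J chi1 (E1 (TA T (A l)) l) (E1 (TA T (A l) \o Tdelay T (tau l)) l) (mG l) (fun _ => lexx 0).
  have cb : forall j x, G l x -> `|chi j ((fun x k => (mu (A l) * Phi T (A l) (TA T (A l) x) k)%E) x) -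
      chi j (((fun x k => (mu (A l) * Phi T (A l) (TA T (A l) x) k)%E) \o Tdelay T (tau l)) x)| <= 0.
    move=> j x Gx /=.
    have -> : (fun k => (mu (A l) * Phi T (A l) (TA T (A l) (Tdelay T (tau l) x)) k)%E) =
              (fun k => (mu (A l) * Phi T (A l) (TA T (A l) x) k)%E).
      by apply/funext => k; rewrite /Tdelay Phi_TA_shift.
    by rewrite subrr normr0.
  move=> /(_ cb) h; apply: le_trans h _.
  rewrite lee_fin big1 // add0r; lra.
Qed.
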